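(* Let $P$ be a finite $p$-group, $\mathcal F$ a saturated fusion system (Frobenius $P$-category) over $P$, and $\mathcal F^*$ the full subcategory of $\mathcal F$ on the nonidentity subgroups of $P$. Then the function \[ k_K=\frac{-\mu(K)}{|\mathcal F^*(K,P)|},\qquad K\in\mathrm{Ob}(\mathcal F^* ), \] is a coweighting for $\mathcal F^*$, the Euler characteristic of $\mathcal F^*$ is \[ \chi(\mathcal F^* )=\sum_{[K]\in[\mathcal F^*]}\frac{-\mu(K)}{|\mathcal F^*(K)|}, \] and $\chi(\mathcal F^* )\in\mathbb Z_{(p)}$ is a $p$-local integer.
   Context: A fusion system $\mathcal F$ over a finite $p$-group $P$ is a category whose objects are the subgroups of $P$ and whose morphism sets $\mathcal F(Q,R)$ are sets of injective group homomorphisms $Q\to R$ such that: $\mathcal F(Q,R)$ contains all conjugation maps $x\mapsto g^{-1}xg$ by $g\in P$ with $g^{-1}Qg\le R$; every morphism is the composite of an $\mathcal F$-isomorphism onto its image followed by an inclusion; and inverses of $\mathcal F$-isomorphisms lie in $\mathcal F$. It is saturated (equivalently, a Frobenius $P$-category in Puig's sense) if (I) for every subgroup $Q$ that is fully normalized in $\mathcal F$ (i.e. $|N_P(Q)|\ge|N_P(Q')|$ for all $Q'$ $\mathcal F$-isomorphic to $Q$), $Q$ is fully centralized ($|C_P(Q)|\ge|C_P(Q')|$ for all such $Q'$) and $\mathrm{Aut}_P(Q)$ is a Sylow $p$-subgroup of $\mathcal F(Q,Q)$; and (II) every $\varphi\in\mathcal F(Q,P)$ with $\varphi(Q)$ fully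 centralized extends to a morphism in $\mathcal F(N_\varphi,P)$, where $N_\varphi=\{g\in N_P(Q):\varphi c_g\varphi^{-1}\in\mathrm{Aut}_P(\varphi(Q))\}$. $\mathcal F^*(K)=\mathcal F^*(K,K)$, and $[\mathcal F^*]$ is the set of isomorphism classes of objects of $\mathcal F^*$. $\mu(K)=\mu(1,K)$ is the Möbius function of the poset of subgroups of $K$ ($\mu(H,H)=1$, $\mu(H,K)=-\sum_{H\le L<K}\mu(H,L)$ for $H<K$). Leinster: a coweighting of a finite category $\mathcal C$ is $k_\bullet$ with $\sum_ak_a|\mathcal C(a,b)|=1$ for all $b$, a weighting is $k^\bullet$ with $\sum_b|\mathcal C(a,b)|k^b=1$ for all $a$; if both exist $\chi(\mathcal C)=\sum k_a=\sum k^b$. $\mathbb Z_{(p)}$ is the ring of rationals with denominator prime to $p$. *)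

(* Defs.v *)
From HB Require Import structures.
From mathcomp Require Import all_boot all_order all_algebra all_fingroup all_solvable.
Set Implicit Arguments. Unset Strict Implicit. Unset Printing Implicit Defensive.
Import GRing.Theory Num.Theory.

Section FusionDefs.
Variable gT : finGroupType.
Local Open Scope group_scope.

(* Morphisms Q -> R are encoded as finite functions gT -> gT that are
   injective homomorphisms on Q, map Q into R, and are 1 outside Q. *)
Definition restrict (Q : {set gT}) (f : gT -> gT) : {ffun gT -> gT} :=
  [ffun x => if x \in Q then f x else 1].

Definition conjmap (Q : {set gT}) (g : gT) : {ffun gT -> gT} :=
  restrict Q (fun x => x ^ g).

Definition injhom (Q R : {set gT}) : {set {ffun gT -> gT}} :=
  [set f : {ffun gT -> gT} |
    [&& [forall x in Q, forall y in Q, f (x * y) == f x * f y],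
        [forall x in Q, forall y in Q, (f x == f y) ==> (x == y)],
        [forall x in Q, f x \in R] &
        [forall x in ~: Q, f x == 1]]].

Definition compmap (Q : {set gT}) (f g : {ffun gT -> gT}) : {ffun gT -> gT} :=
  restrict Q (fun x => g (f x)).

Definition invmap (Q : {set gT}) (f : {ffun gT -> gT}) : {ffun gT -> gT} :=
  [ffun y => if y \in f @: Q then odflt 1 [pick x in Q | f x == y] else 1].

Definition subgp (P Q : {set gT}) : bool := group_set Q && (Q \subset P).

Record fusion_system (P : {group gT})
    (F : {set gT} -> {set gT} -> {set {ffun gT -> gT}}) : Prop := {
  fs_hom : forall Q R, subgp P Q -> subgp P R -> F Q R \subset injhom Q R;
  fs_conj : forall Q R g, subgp P Q -> subgp P R -> g \in P ->
     Q :^ g \subset R -> conjmap Q g \in F Q R;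
  fs_comp : forall Q R S f g, subgp P Q -> subgp P R -> subgp P S ->
     f \in F Q R -> g \in F R S -> compmap Q f g \in F Q S;
  fs_factor : forall Q R f, subgp P Q -> subgp P R ->
     f \in F Q R -> f \in F Q (f @: Q);
  fs_inv : forall Q R f, subgp P Q -> subgp P R ->
     f \in F Q R -> f @: Q = R -> invmap Q f \in F R Q
}.

Definition Fiso (F : {set gT} -> {set gT} -> {set {ffun gT -> gT}})
    (Q Q' : {set gT}) : bool :=
  [exists f in F Q Q', f @: Q == Q'].

Definition fully_normalized (P : {set gT}) F (Q : {set gT}) : Prop :=
  forall Q', subgp P Q' -> Fiso F Q Q' -> #|'N_P(Q')| <= #|'N_P(Q)|.

Definition fully_centralized (P : {set gT}) F (Q : {set gT}) : Prop :=
  forall Q', subgp P Q' -> Fiso F Q Q' -> #|'C_P(Q')| <= #|'C_P(Q)|.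

(* Aut_F(Q) = F(Q,Q), realised as permutations of gT fixing gT \ Q pointwise *)
Definition AutF (F : {set gT} -> {set gT} -> {set {ffun gT -> gT}})
    (Q : {set gT}) : {set {perm gT}} :=
  [set s : {perm gT} | (restrict Q s \in F Q Q) && [forall x in ~: Q, s x == x]].

Definition AutP (P Q : {set gT}) : {set {perm gT}} :=
  [set s : {perm gT} | [exists g in 'N_P(Q), restrict Q s == conjmap Q g]
                        && [forall x in ~: Q, s x == x]].

(* N_phi = { g in N_P(Q) : phi c_g phi^-1 in Aut_P(phi(Q)) } *)
Definition Nphi (P Q : {set gT}) (f : {ffun gT -> gT}) : {set gT} :=
  [set g in 'N_P(Q) | [exists h in 'N_P(f @: Q),
      [forall y in f @: Q, f (invmap Q f y ^ g) == y ^ h]]].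

Record saturated (p : nat) (P : {group gT})
    (F : {set gT} -> {set gT} -> {set {ffun gT -> gT}}) : Prop := {
  sat_fs : fusion_system P F;
  sat_I : forall Q, subgp P Q -> fully_normalized P F Q ->
     fully_centralized P F Q /\ p.-Sylow(AutF F Q) (AutP P Q);
  sat_II : forall Q f, subgp P Q -> f \in F Q P ->
     fully_centralized P F (f @: Q) ->
     exists2 g, g \in F (Nphi P Q f) P & {in Q, forall x, g x = f x}
}.

(* Moebius function of the subgroup poset, by well-founded recursion (fuel) *)
Fixpoint mob_rec (n : nat) (H K : {set gT}) : int :=
  match n with
  | 0 => 0%R
  | n'.+1 => if H == K then 1%R
             else if H \subset K then
               (- \sum_(L : {group gT} | (H \subset L) && (L \proper K)) mob_rec n' H L)%R
             else 0%R
  end.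
Definition mobius (H K : {set gT}) : int := mob_rec #|K|.+1 H K.
Definition mu (K : {set gT}) : int := mobius [1 gT] K.

Definition Fstar_ob (P : {set gT}) : {set {set gT}} :=
  [set K : {set gT} | subgp P K && (K != [1 gT])].

Definition Fstar_classes (P : {set gT}) F : {set {set {set gT}}} :=
  [set [set L in Fstar_ob P | Fiso F K L] | K in Fstar_ob P].

Definition class_rep (C : {set {set gT}}) : {set gT} := odflt set0 [pick K in C].

End FusionDefs.

(* Leinster: weightings, coweightings, Euler characteristic of a finite
   category with objects Ob and hom-set cardinalities hom. *)
Section Leinster.
Variable I : finType.
Local Open Scope ring_scope.

Definition coweighting (Ob : {set I}) (hom : I -> I -> nat) (k : I -> rat) : Prop :=
  forall b, b \in Ob -> \sum_(a in Ob) k a * (hom a b)%:R = 1.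

Definition weighting (Ob : {set I}) (hom : I -> I -> nat) (k : I -> rat) : Prop :=
  forall a, a \in Ob -> \sum_(b in Ob) (hom a b)%:R * k b = 1.

Definition euler_char (Ob : {set I}) (hom : I -> I -> nat) (x : rat) : Prop :=
  (exists kw, weighting Ob hom kw) /\
  (exists2 kc, coweighting Ob hom kc & \sum_(a in Ob) kc a = x).

End Leinster.

Definition p_local_integer (p : nat) (x : rat) : bool := ~~ (p %| `|denq x|)%N.

(* Main.v *)
Require Import Defs.
From HB Require Import structures.
From mathcomp Require Import all_boot all_order all_algebra all_fingroup all_solvable.
From mathcomp Require Import ring zify.
Import GRing.Theory Num.Theory.

Module Aux.
Set Implicit Arguments. Unset Strict Implicit. Unset Printing Implicit Defensive.

Section Basic.
Variable gT : finGroupType.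
Local Open Scope group_scope.
Implicit Types Q R K X : {set gT}.

Lemma injhomP Q R (f : {ffun gT -> gT}) : f \in injhom Q R ->
  [/\ {in Q &, forall x y, f (x * y) = f x * f y},
      {in Q &, injective f}, {in Q, forall x, f x \in R} &
      forall x, x \notin Q -> f x = 1].
Proof.
rewrite inE => /and4P[/forall_inP hm /forall_inP hi /forall_inP hR /forall_inP h1].
split.
- by move=> x y xQ yQ; apply/eqP; have /forall_inP := hm x xQ; apply.
- by move=> x y xQ yQ fxy; apply/eqP; have /forall_inP := hi x xQ; move/(_ y yQ)/implyP; apply; rewrite fxy.
- exact: hR.
- by move=> x xQ; apply/eqP; apply: h1; rewrite inE.
Qed.

Lemma hom1 Q (f : gT -> gT) : group_set Q ->
  {in Q &, forall x y, f (x * y) = f x * f y} -> f 1 = 1.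
Proof.
move=> /andP[Q1 _] hm; have := hm 1 1 Q1 Q1; rewrite mulg1 => h.
by apply: (mulgI (f 1)); rewrite -h mulg1.
Qed.

Lemma group_set_im Q (f : gT -> gT) : group_set Q ->
  {in Q &, forall x y, f (x * y) = f x * f y} -> group_set (f @: Q).
Proof.
move=> gQ hm; have f1 := hom1 gQ hm; case/andP: gQ => Q1 QM.
apply/andP; split; first by apply/imsetP; exists 1.
apply/subsetP=> _ /mulsgP[_ _ /imsetP[x xQ ->] /imsetP[y yQ ->] ->].
rewrite -hm //; apply/imsetP; exists (x * y) => //.
by move/subsetP: QM; apply; apply/mulsgP; exists x y.
Qed.

End Basic.

Section FS.
Variable gT : finGroupType.
Local Open Scope group_scope.
Implicit Types Q R K X : {set gT}.
Variable P : {group gT}.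
Variable F : {set gT} -> {set gT} -> {set {ffun gT -> gT}}.
Hypothesis FS : fusion_system P F.
Local Notation sub := (subgp P).

Lemma subgp_trans b K : sub b -> subgp b K -> sub K.
Proof. by case/andP=> _ bP /andP[gK Kb]; rewrite /subgp gK (subset_trans Kb bP). Qed.

Lemma FhomP Q R f : sub Q -> sub R -> f \in F Q R ->
  [/\ {in Q &, forall x y, f (x * y) = f x * f y},
      {in Q &, injective f}, {in Q, forall x, f x \in R} &
      forall x, x \notin Q -> f x = 1].
Proof. by move=> sQ sR fF; apply: injhomP; apply: (subsetP (fs_hom FS sQ sR)). Qed.

Lemma im_sub Q R f : sub Q -> sub R -> f \in F Q R ->
  [/\ sub (f @: Q), f @: Q \subset R & #|f @: Q| = #|Q|].
Proof.
move=> sQ sR fF; have [hm inj inR _] := FhomP sQ sR fF.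
have fQR : f @: Q \subset R by apply/subsetP=> _ /imsetP[x xQ ->]; apply: inR.
split=> //; last exact: card_in_imset.
rewrite /subgp group_set_im //; last by case/andP: sQ.
by case/andP: sR => _ RP; rewrite (subset_trans fQR).
Qed.

Lemma conj1E Q : conjmap Q 1 = restrict Q id.
Proof. by apply/ffunP=> x; rewrite !ffunE conjg1. Qed.

Lemma conj1_F Q R : sub Q -> sub R -> Q \subset R -> restrict Q id \in F Q R.
Proof. by move=> sQ sR QR; rewrite -conj1E; apply: (fs_conj FS sQ sR (group1 P)); rewrite conjsg1. Qed.

Lemma F_incl Q R S f : sub Q -> sub R -> sub S -> R \subset S ->
  f \in F Q R -> f \in F Q S.
Proof.
move=> sQ sR sS RS fF.
have := fs_comp FS sQ sR sS fF (conj1_F sR sS RS).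
suff -> : compmap Q f (restrict R id) = f by [].
have [_ _ inR out] := FhomP sQ sR fF.
apply/ffunP=> x; rewrite /compmap /restrict !ffunE; case: ifP => xQ.
  by rewrite inR.
by rewrite out ?xQ.
Qed.

Definition Iso Q K := [set f in F Q K | f @: Q == K].

Lemma Iso_part Q b K : sub Q -> sub b -> subgp b K ->
  [set f in F Q b | f @: Q == K] = Iso Q K.
Proof.
move=> sQ sb bK; have sK := subgp_trans sb bK.
apply/setP=> f; rewrite !inE; apply/andP/andP=> -[fF fK]; split=> //.
  by move/eqP: fK => fK; rewrite -fK; apply: (fs_factor FS sQ sb).
by apply: (F_incl sQ sK sb _ fF); case/andP: bK.
Qed.

Lemma card_F_part Q b : sub Q -> sub b ->
  #|F Q b| = (\sum_(K : {set gT} | subgp b K) #|Iso Q K|)%N.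
Proof.
move=> sQ sb; rewrite -sum1_card.
rewrite (partition_big (fun f : {ffun gT -> gT} => [set f x | x in Q]) (fun K : {set gT} => subgp b K)) /=; last first.
  move=> f fF; case: (im_sub sQ sb fF) => hs1 hs2 _.
  by rewrite /subgp hs2 andbT; case/andP: hs1.
apply: eq_bigr => K bK; rewrite -(Iso_part sQ sb bK) sum1_card.
by apply: eq_card => f; rewrite inE.
Qed.


Lemma card_inj_le (T T' : finType) (A : {set T}) (B : {set T'}) (h : T -> T') :
  {in A &, injective h} -> {in A, forall x, h x \in B} -> #|A| <= #|B|.
Proof.
move=> inj hAB; rewrite -(card_in_imset inj); apply: subset_leq_card.
by apply/subsetP=> _ /imsetP[x xA ->]; apply: hAB.
Qed.

Section Invmap.
Variables (Q : {set gT}) (f : gT -> gT).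
Hypothesis finj : {in Q &, injective f}.

Lemma invmapK x : x \in Q -> invmap Q (finfun f) (f x) = x.
Proof.
move=> xQ; rewrite /invmap ffunE.
have -> : f x \in [set (finfun f) z | z in Q].
  by apply/imsetP; exists x => //; rewrite ffunE.
case: pickP => [x' /andP[x'Q /eqP] | /(_ x)]; last by rewrite xQ ffunE eqxx.
by rewrite ffunE => e; apply: finj.
Qed.

Lemma invmap_in y : y \in [set (finfun f) z | z in Q] ->
  invmap Q (finfun f) y \in Q /\ f (invmap Q (finfun f) y) = y.
Proof. by case/imsetP=> x xQ ->; rewrite [finfun f x]ffunE invmapK. Qed.

Lemma invmap_out y : y \notin [set (finfun f) z | z in Q] -> invmap Q (finfun f) y = 1.
Proof. by move=> yn; rewrite /invmap ffunE (negPf yn). Qed.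
End Invmap.

Lemma ffun_eta (g : {ffun gT -> gT}) : finfun g = g.
Proof. by apply/ffunP=> x; rewrite ffunE. Qed.

Lemma invmap_im Q R (g : {ffun gT -> gT}) : {in Q &, injective g} ->
  invmap Q g @: (g @: Q) = Q.
Proof.
move=> inj; apply/setP=> x; apply/imsetP/idP=> [[y yg ->] | xQ].
  have := invmap_in inj; rewrite ffun_eta => /(_ y yg) [] //.
exists (g x); first by apply/imsetP; exists x.
by have := invmapK inj xQ; rewrite ffun_eta.
Qed.

Lemma invmap_inj Q (g : {ffun gT -> gT}) : {in Q &, injective g} ->
  {in g @: Q &, injective (invmap Q g)}.
Proof.
move=> inj y1 y2 y1Q y2Q e.
have := invmap_in inj; rewrite ffun_eta => h.
by have [_ <-] := h _ y1Q; have [_ <-] := h _ y2Q; rewrite e.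
Qed.

Lemma invmap_invol Q (g : {ffun gT -> gT}) : {in Q &, injective g} ->
  (forall x, x \notin Q -> g x = 1) -> invmap (g @: Q) (invmap Q g) = g.
Proof.
move=> inj out; apply/ffunP=> x.
have inj' := invmap_inj inj.
case xQ: (x \in Q).
  have := invmapK inj xQ; rewrite ffun_eta => e.
  have gx : g x \in g @: Q by apply/imsetP; exists x.
  have := invmapK inj' gx.
  have -> : finfun (invmap Q g) = invmap Q g by apply/ffunP=> z; rewrite ffunE.
  by rewrite e.
rewrite out ?xQ //.
have e2 : finfun (invmap Q g) = invmap Q g by apply/ffunP=> z; rewrite ffunE.
have := @invmap_out (g @: Q) (invmap Q g) x; rewrite e2; apply.
rewrite invmap_im //.
by rewrite xQ.
Qed.

Lemma Fiso_refl Q : sub Q -> Fiso F Q Q.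
Proof.
move=> sQ; apply/exists_inP; exists (restrict Q id); first exact: conj1_F.
apply/eqP/setP=> x; apply/imsetP/idP=> [[y yQ ->]|xQ]; first by rewrite ffunE yQ.
by exists x; rewrite // ffunE xQ.
Qed.

Lemma Fiso_sym Q K : sub Q -> sub K -> Fiso F Q K -> Fiso F K Q.
Proof.
move=> sQ sK /exists_inP[f fF /eqP fK]; apply/exists_inP; exists (invmap Q f).
  exact: (fs_inv FS sQ sK fF fK).
have [_ inj _ _] := FhomP sQ sK fF.
by rewrite -fK invmap_im.
Qed.

Lemma compmap_im Q (f g : {ffun gT -> gT}) : compmap Q f g @: Q = g @: (f @: Q).
Proof.
rewrite -imset_comp; apply: eq_in_imset => x xQ.
by rewrite /compmap /restrict ffunE xQ.
Qed.

Lemma Fiso_trans Q K L : sub Q -> sub K -> sub L ->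
  Fiso F Q K -> Fiso F K L -> Fiso F Q L.
Proof.
move=> sQ sK sL /exists_inP[f fF /eqP fK] /exists_inP[g gF /eqP gL].
apply/exists_inP; exists (compmap Q f g); first exact: (fs_comp FS sQ sK sL fF gF).
by rewrite compmap_im fK gL.
Qed.

Lemma card_Iso_le Q K : sub Q -> sub K -> #|Iso Q K| <= #|Iso K Q|.
Proof.
move=> sQ sK; apply: (@card_inj_le _ _ _ _ (invmap Q)).
  move=> f g; rewrite !inE => /andP[fF /eqP fK] /andP[gF /eqP gK] e.
  have [_ fi _ fo] := FhomP sQ sK fF; have [_ gi _ go] := FhomP sQ sK gF.
  by rewrite -(invmap_invol fi fo) -(invmap_invol gi go) fK gK e.
move=> f; rewrite !inE => /andP[fF /eqP fK].
have [_ fi _ _] := FhomP sQ sK fF.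
rewrite (fs_inv FS sQ sK fF fK) /= -fK invmap_im //.
Qed.

Lemma card_Iso_sym Q K : sub Q -> sub K -> #|Iso Q K| = #|Iso K Q|.
Proof. by move=> sQ sK; apply/eqP; rewrite eqn_leq !card_Iso_le. Qed.

Lemma card_F_src_le Q K X : sub Q -> sub K -> sub X -> Fiso F Q K ->
  #|F K X| <= #|F Q X|.
Proof.
move=> sQ sK sX /exists_inP[phi phF /eqP phK].
apply: (@card_inj_le _ _ _ _ (compmap Q phi)); last first.
  by move=> g gF; apply: (fs_comp FS sQ sK sX phF gF).
move=> g g' gF g'F e; apply/ffunP=> y.
have [_ _ _ go] := FhomP sK sX gF; have [_ _ _ g'o] := FhomP sK sX g'F.
case yK: (y \in K); last by rewrite go ?g'o ?yK.
move: yK; rewrite -phK => /imsetP[x xQ ->].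
have := congr1 (fun h : {ffun gT -> gT} => h x) e.
by rewrite /compmap /restrict !ffunE xQ.
Qed.

Lemma card_F_src Q K X : sub Q -> sub K -> sub X -> Fiso F Q K ->
  #|F K X| = #|F Q X|.
Proof.
move=> sQ sK sX QK; apply/eqP; rewrite eqn_leq card_F_src_le //.
by rewrite card_F_src_le // Fiso_sym.
Qed.

Lemma Iso_full Q K : sub Q -> sub K -> #|Q| = #|K| -> Iso Q K = F Q K.
Proof.
move=> sQ sK QK; apply/setP=> f; rewrite inE; case fF: (f \in F Q K) => //=.
have [_ fQK c] := im_sub sQ sK fF.
by rewrite eqEcard fQK c QK leqnn.
Qed.

Lemma Fiso_card Q K : sub Q -> sub K -> Fiso F Q K -> #|Q| = #|K|.
Proof.
move=> sQ sK /exists_inP[f fF /eqP fK].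
by have [_ _ <-] := im_sub sQ sK fF; rewrite fK.
Qed.

Lemma FisoE Q K : Fiso F Q K = (Iso Q K != set0).
Proof.
apply/exists_inP/set0Pn=> [[f fF fK]|[f]]; first by exists f; rewrite inE fF.
by rewrite inE => /andP[]; exists f.
Qed.

End FS.

Section Mob.
Variable gT : finGroupType.
Local Open Scope group_scope.
Implicit Types Q R K X L : {set gT}.

Lemma sum_groups (V : nmodType) (Pr : {set gT} -> bool) (f : {set gT} -> V) :
  (\sum_(L : {group gT} | Pr L) f L = \sum_(L : {set gT} | group_set L && Pr L) f L)%R.
Proof.
symmetry.
rewrite (reindex_onto (fun G : {group gT} => gval G) (fun L => insubd 1%G L)) /=.
  apply: eq_bigl => G; rewrite groupP /=.
  case: (Pr G) => //=; apply/eqP/val_inj; rewrite /= insubdK //; exact: groupP.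
by move=> L /andP[gL _]; rewrite insubdK.
Qed.

Lemma mob_fuel n m H K : #|K| < n -> #|K| < m -> mob_rec n H K = mob_rec m H K.
Proof.
elim: n m H K => [|n IH] [|m] H K //= Kn Km.
case: (H == K) => //; case: (H \subset K) => //; congr (- _)%R.
apply: eq_bigr => L /andP[_ LK]; apply: IH.
  by apply: leq_trans (proper_card LK) _.
by apply: leq_trans (proper_card LK) _.
Qed.

Lemma mob_recS n H K : mob_rec n.+1 H K = if H == K then 1%R
             else if H \subset K then
               (- \sum_(L : {group gT} | (H \subset L) && (L \proper K)) mob_rec n H L)%R
             else 0%R.
Proof. by []. Qed.

Lemma mu1 : mu [1 gT] = 1%R.
Proof. by rewrite /mu /mobius /= eqxx. Qed.

Lemma mu_rec K : group_set K -> K != 1 ->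
  mu K = (- \sum_(L : {set gT} | group_set L && (L \proper K)) mu L)%R.
Proof.
move=> gK nK; rewrite {1}/mu {1}/mobius mob_recS eq_sym (negPf nK).
have -> : [1 gT] \subset K by rewrite sub1set; case/andP: gK.
congr (- _)%R; rewrite (sum_groups (fun L => ([1 gT] \subset L) && (L \proper K)) (fun L => mob_rec #|K| [1 gT] L)).
apply: eq_big => L; first by case gL: (group_set L) => //=; rewrite sub1set; case/andP: gL => ->.
case/andP=> gL /andP[_ LK]; apply: mob_fuel => //.
by apply: leq_trans (proper_card LK) _.
Qed.

Lemma mu_sum0 K : group_set K -> K != 1 ->
  (\sum_(L : {set gT} | group_set L && (L \subset K)) mu L = 0)%R.
Proof.
move=> gK nK; rewrite (bigD1 K) /=; last by rewrite gK subxx.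
rewrite mu_rec // addrC; apply/eqP; rewrite subr_eq0; apply/eqP.
apply: eq_bigl => L; rewrite properEneq; case: (group_set L) => //=.
by rewrite andbC.
Qed.


Section MuInv.
Variables (Q : {set gT}) (phi : gT -> gT).
Hypothesis gQ : group_set Q.
Hypothesis hm : {in Q &, forall x y, phi (x * y) = phi x * phi y}.
Hypothesis inj : {in Q &, injective phi}.

Lemma pre_group L G : group_set L -> L \subset Q -> group_set G ->
  group_set (L :&: phi @^-1: G).
Proof.
move=> gL LQ gG; apply/group_setP; split.
  rewrite !inE; case/andP: gL => -> _; rewrite (hom1 gQ hm).
  by case/andP: gG.
move=> x y; rewrite !inE => /andP[xL xG] /andP[yL yG].
have /group_setP[_ gLM] := gL; have /group_setP[_ gGM] := gG.
rewrite gLM //= hm ?(subsetP LQ) //; exact: gGM.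
Qed.

Lemma card_im L : L \subset Q -> #|phi @: L| = #|L|.
Proof. by move=> LQ; apply: card_in_imset => x y xL yL; apply: inj; apply: (subsetP LQ). Qed.

Lemma mu_inv L : group_set L -> L \subset Q -> mu (phi @: L) = mu L.
Proof.
elim: {L}_.+1 {-2}L (ltnSn #|L|) => // n IH L Ln gL LQ.
have L1: 1 \in L by case/andP: gL.
case: (eqVneq L 1) => [-> | nL].
  by rewrite set1gE imset_set1 (hom1 gQ hm).
have nL' : phi @: L != 1.
  apply: contra nL => /eqP e; rewrite eq_sym eqEcard.
  have h1 : (1 : {set gT}) \subset L by rewrite set1gE sub1set.
  by rewrite h1 /= -(card_im LQ) e.
have gL' : group_set (phi @: L) by apply: group_set_im => //; move=> x y xL yL; apply: hm; apply: (subsetP LQ).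
rewrite (mu_rec gL nL) (mu_rec gL' nL'); congr (- _)%R.
rewrite (reindex_onto (fun M : {set gT} => phi @: M) (fun M' : {set gT} => L :&: phi @^-1: M')) /=; last first.
  move=> M' /andP[_ /properP[M'L _]]; apply/setP=> y; apply/imsetP/idP=> [[x]|yM].
    by rewrite !inE => /andP[_ ?] ->.
  have := subsetP M'L y yM; case/imsetP=> x xL e; exists x => //.
  by rewrite !inE xL -e.
apply: eq_big => M; last first.
  move=> /andP[/andP[gM' pM] /eqP e]; apply: IH.
  - have ML : M \subset L by rewrite -e subsetIl.
    rewrite -ltnS; apply: leq_trans Ln; rewrite ltnS.
    rewrite -(card_im (subset_trans ML LQ)) -(card_im LQ); exact: proper_card.
  - by rewrite -e; apply: pre_group.
  - by rewrite -e; apply: subset_trans LQ; apply: subsetIl.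
apply/andP/andP=> [[/andP[gM' pM] /eqP e] | [gM pM]].
  have ML : M \subset L by rewrite -e subsetIl.
  have MQ := subset_trans ML LQ.
  split; first by rewrite -e; apply: pre_group.
  by rewrite properEcard ML -(card_im MQ) -(card_im LQ) proper_card.
have ML : M \subset L by case/andP: pM.
have MQ := subset_trans ML LQ.
split.
  apply/andP; split.
    by apply: group_set_im => // x y xM yM; apply: hm; apply: (subsetP MQ).
  by rewrite properEcard imsetS //= (card_im MQ) (card_im LQ) proper_card.
apply/eqP/setP=> x; rewrite !inE; apply/andP/idP=> [[xL /imsetP[m mM e]]|xM].
  by rewrite (inj (subsetP LQ x xL) (subsetP MQ m mM) e).
by rewrite (subsetP ML x xM); split=> //; apply/imsetP; exists x.
Qed.
End MuInv.
End Mob.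

Section Cow.
Variable gT : finGroupType.
Implicit Types Q R K X : {set gT}.
Local Open Scope group_scope.
Variable P : {group gT}.
Variable F : {set gT} -> {set gT} -> {set {ffun gT -> gT}}.
Hypothesis FS : fusion_system P F.
Local Notation sub := (subgp P).
Local Notation Ob := (Fstar_ob P).

Lemma sub1 : sub 1.
Proof. by rewrite /subgp group_set_one sub1G. Qed.

Lemma subPP : sub P.
Proof. by rewrite /subgp groupP subxx. Qed.

Lemma Fiso_mu Q K : sub Q -> sub K -> Fiso F Q K -> mu Q = mu K.
Proof.
move=> sQ sK /exists_inP[f fF /eqP fK].
have [hm inj _ _] := FhomP FS sQ sK fF.
have gQ : group_set Q by case/andP: sQ.
by rewrite -fK (mu_inv gQ hm inj gQ (subxx Q)).
Qed.

Lemma F_gt0 Q : sub Q -> 0 < #|F Q P|.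
Proof.
move=> sQ; apply/card_gt0P; exists (restrict Q id).
by apply: (conj1_F FS sQ subPP); case/andP: sQ.
Qed.

Lemma Iso_card0 Q K : sub Q -> sub K -> #|Q| != #|K| -> Iso F Q K = set0.
Proof.
move=> sQ sK ne; case: (eqVneq (Iso F Q K) set0) => // h.
have QK : Fiso F Q K by rewrite FisoE h.
by rewrite (Fiso_card FS sQ sK QK) eqxx in ne.
Qed.

Lemma sum_Ob (V : nmodType) (g : {set gT} -> V) : g 1 = 0%R ->
  (\sum_(a in Ob) g a = \sum_(a : {set gT} | sub a) g a)%R.
Proof.
move=> g1; rewrite [RHS](bigD1 1) /= ?sub1 // g1 add0r.
by apply: eq_bigl => a; rewrite inE andbC.
Qed.


Lemma Ob_sub a : a \in Ob -> sub a.
Proof. by rewrite inE => /andP[]. Qed.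

Lemma card_neq1 K : sub K -> K != 1 -> #|K| != #|(1 : {set gT})|.
Proof.
move=> sK nK; apply: contra nK => /eqP e; rewrite eq_sym eqEcard e leqnn andbT.
by rewrite set1gE sub1set; case/andP: sK => /andP[].
Qed.

Local Open Scope ring_scope.

Lemma cow_term a K : sub a -> sub K ->
  (- (mu a)%:~R / (#|F a P|)%:R) * (#|Iso F a K|)%:R =
  (- (mu K)%:~R / (#|F K P|)%:R) * (#|Iso F a K|)%:R :> rat.
Proof.
move=> sa sK; case: (eqVneq (Iso F a K) set0) => [->|h]; first by rewrite cards0 !mulr0.
have aK : Fiso F a K by rewrite FisoE h.
by rewrite (Fiso_mu sa sK aK) -(card_F_src FS sa sK subPP aK).
Qed.

Lemma sum_Iso_src K : sub K -> K != 1%g ->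
  (\sum_(a in Ob) #|Iso F a K| = #|F K P|)%N.
Proof.
move=> sK nK.
rewrite (eq_bigr (fun a => #|Iso F K a|)); last first.
  by move=> a /Ob_sub sa; apply: (card_Iso_sym FS sa sK).
rewrite (sum_Ob (g:=fun a => #|Iso F K a|)); last by rewrite (Iso_card0 sK sub1 (card_neq1 sK nK)) cards0.
by rewrite (card_F_part FS sK subPP).
Qed.

Lemma coweight : coweighting Ob (fun a b => #|F a b|) (fun K => - (mu K)%:~R / (#|F K P|)%:R).
Proof.
move=> b bOb; have sb := Ob_sub bOb.
under eq_bigr => a aOb do rewrite (card_F_part FS (Ob_sub aOb) sb) natr_sum mulr_sumr.
rewrite exchange_big /=.
rewrite (eq_bigr (fun K => if K == 1%g then 0 else - (mu K)%:~R)); last first.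
  move=> K bK; have sK := subgp_trans sb bK.
  rewrite (eq_bigr (fun a => (- (mu K)%:~R / (#|F K P|)%:R) * (#|Iso F a K|)%:R)); last first.
    by move=> a /Ob_sub sa; apply: cow_term.
  rewrite -mulr_sumr -natr_sum; case: (eqVneq K 1%g) => [->|nK].
    rewrite big1 ?mulr0 // => a; rewrite inE => /andP[sa na].
    by rewrite (Iso_card0 sa sub1 (card_neq1 sa na)) cards0.
  rewrite sum_Iso_src // divfK //.
  by rewrite pnatr_eq0 -lt0n F_gt0.
rewrite (bigD1 1%g) /=; last first.
  by rewrite /subgp group_set_one set1gE sub1set; case/andP: sb => /andP[].
rewrite eqxx add0r.
have [gb nb] : group_set b /\ b != 1%g by move: bOb; rewrite inE /subgp => /andP[/andP[]].
have := mu_sum0 gb nb; rewrite (bigD1 1%g) /=; last first.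
  by rewrite group_set_one set1gE sub1set; case/andP: gb.
rewrite mu1 => /eqP; rewrite addrC addr_eq0 => /eqP h.
rewrite (eq_bigr (fun K => - (mu K)%:~R)); last by move=> K /andP[_ /negPf ->].
by rewrite sumrN -rmorph_sum /= h rmorphN /= opprK.
Qed.

End Cow.

Section W.
Variable gT : finGroupType.
Implicit Types Q R K X : {set gT}.
Variable P : {group gT}.
Variable F : {set gT} -> {set gT} -> {set {ffun gT -> gT}}.
Hypothesis FS : fusion_system P F.
Local Notation sub := (subgp P).
Local Notation Ob := (Fstar_ob P).
Local Open Scope ring_scope.

Fixpoint kwr (n : nat) (K : {set gT}) : rat :=
  if n is n'.+1 then ((#|F K P|)%:R)^-1 -
     \sum_(b : {set gT} | (b \in Ob) && (K \proper b)) kwr n' b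
  else 0.
Definition kw K := kwr (#|P| - #|K|).+1 K.

Lemma Ob_subP b : b \in Ob -> b \subset P.
Proof. by move/Ob_sub/andP=> []. Qed.

Lemma kwr_fuel n m K : K \subset P -> (#|P| - #|K| < n)%N -> (#|P| - #|K| < m)%N ->
  kwr n K = kwr m K.
Proof.
elim: n m K => [|n IH] [|m] K //= KP Kn Km; congr (_ - _).
apply: eq_bigr => b /andP[bOb Kb]; have bP := Ob_subP bOb.
have c1 := proper_card Kb; have c2 := subset_leq_card bP.
apply: IH => //; move: Kn Km c1 c2; set x := #|P|; set y := #|K|; set z := #|b|; lia.
Qed.

Lemma kwrS n K : kwr n.+1 K = ((#|F K P|)%:R)^-1 -
     \sum_(b : {set gT} | (b \in Ob) && (K \proper b)) kwr n b.
Proof. by []. Qed.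

Lemma kw_sum K : K \in Ob ->
  \sum_(b : {set gT} | (b \in Ob) && (K \subset b)) kw b = ((#|F K P|)%:R)^-1.
Proof.
move=> KOb; rewrite (bigD1 K) /=; last by rewrite KOb subxx.
have KP := Ob_subP KOb.
have -> : kw K = ((#|F K P|)%:R)^-1 - \sum_(b : {set gT} | (b \in Ob) && (K \proper b)) kw b.
  rewrite {1}/kw kwrS; congr (_ - _); apply: eq_bigr => b /andP[bOb Kb]; rewrite /kw.
  have bP := Ob_subP bOb; have c1 := proper_card Kb; have c2 := subset_leq_card bP.
  apply: kwr_fuel => //; move: c1 c2 (subset_leq_card KP); set x := #|P|; set y := #|K|; set z := #|b|; lia.
rewrite [X in _ + X = _](eq_bigl (fun b => (b \in Ob) && (K \proper b))) ?subrK //.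
by move=> b; rewrite properEneq eq_sym; case: (b \in Ob); rewrite //= andbC.
Qed.


Lemma weight : weighting Ob (fun a b => #|F a b|) kw.
Proof.
move=> a aOb; have sa := Ob_sub aOb.
under eq_bigr => b bOb do rewrite (card_F_part FS sa (Ob_sub bOb)) natr_sum mulr_suml.
rewrite (exchange_big_dep sub) /=; last first.
  by move=> b K bOb bK; exact: subgp_trans (Ob_sub bOb) bK.
rewrite (eq_bigr (fun K => (#|Iso F a K|)%:R * ((#|F a P|)%:R)^-1)); last first.
  move=> K sK; rewrite -mulr_sumr.
  case: (eqVneq (Iso F a K) set0) => [->|h]; first by rewrite cards0 !mul0r.
  have aK : Fiso F a K by rewrite FisoE h.
  have KOb : K \in Ob.
    rewrite inE sK /=; have := card_neq1 sa; rewrite (Fiso_card FS sa sK aK).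
    move: aOb; rewrite inE => /andP[_ na] /(_ na); apply: contra => /eqP ->.
    by [].
  congr (_ * _); rewrite -(card_F_src FS sa sK (@subPP _ P) aK) -(kw_sum KOb).
  apply: eq_bigl => b; case: (b \in Ob) => //=; rewrite /subgp.
  by case/andP: sK => ->.
rewrite -mulr_suml -natr_sum -(card_F_part FS sa (@subPP _ P)) divff //.
by rewrite pnatr_eq0 -lt0n F_gt0.
Qed.

End W.

Section Chi.
Variable gT : finGroupType.
Implicit Types Q R K X : {set gT}.
Variable P : {group gT}.
Variable F : {set gT} -> {set gT} -> {set {ffun gT -> gT}}.
Hypothesis FS : fusion_system P F.
Local Notation sub := (subgp P).
Local Notation Ob := (Fstar_ob P).
Local Notation cls K := [set L in Ob | Fiso F K L].

Lemma memcls X L : (L \in cls X) = (L \in Ob) && Fiso F X L.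
Proof. by rewrite !inE. Qed.

Lemma Ob_iso K L : K \in Ob -> sub L -> Fiso F K L -> L \in Ob.
Proof.
move=> KOb sL KL; have sK := Ob_sub KOb.
rewrite inE sL /=; have := card_neq1 sK; rewrite (Fiso_card FS sK sL KL).
move: KOb; rewrite inE => /andP[_ nK] /(_ nK); apply: contra => /eqP ->.
by [].
Qed.

Lemma cls_eq a K : a \in Ob -> K \in Ob -> (cls a == cls K) = Fiso F K a.
Proof.
move=> aOb KOb; have sa := Ob_sub aOb; have sK := Ob_sub KOb.
apply/eqP/idP=> [e | Ka].
  have : a \in cls a by rewrite memcls aOb (Fiso_refl FS sa).
  by rewrite e memcls => /andP[].
apply/setP=> L; rewrite !memcls; case LOb: (L \in Ob) => //=; have sL := Ob_sub LOb.
apply/idP/idP=> h.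
  exact: (Fiso_trans FS sK sa sL Ka h).
exact: (Fiso_trans FS sa sK sL (Fiso_sym FS sK sa Ka) h).
Qed.

Lemma rep_cls C : C \in Fstar_classes P F ->
  [/\ class_rep C \in Ob, C = cls (class_rep C) & class_rep C \in C].
Proof.
case/imsetP=> K KOb ->; rewrite /class_rep.
case: pickP => [r|]; last by move/(_ K); rewrite memcls KOb (Fiso_refl FS (Ob_sub KOb)).
rewrite memcls => /andP[rOb Kr] /=; split=> //; last by rewrite rOb.
by apply/eqP; rewrite eq_sym cls_eq.
Qed.

Lemma card_Iso_rep r K : sub r -> sub K -> Fiso F r K -> #|Iso F r K| = #|F r r|.
Proof.
move=> sr sK rK; rewrite (card_Iso_sym FS sr sK) (Iso_full FS sK sr); last first.
  by rewrite (Fiso_card FS sr sK rK).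
exact: (card_F_src FS sr sK sr rK).
Qed.

Lemma card_F_cls r : r \in Ob -> #|F r P| = (#|cls r| * #|F r r|)%N.
Proof.
move=> rOb; have sr := Ob_sub rOb.
rewrite (card_F_part FS sr (@subPP _ P)) -sum1_card big_distrl /=.
rewrite (bigID (fun K => Fiso F r K)) /= addnC big1 ?add0n; last first.
  move=> K /andP[sK nK]; apply/eqP; rewrite cards_eq0.
  by apply: contraNT nK; rewrite FisoE.
rewrite [RHS](eq_bigl (fun K => sub K && Fiso F r K)); last first.
  move=> K; rewrite memcls; apply/andP/andP=> [[KOb ->]|[sK rK]]; first by rewrite Ob_sub.
  by rewrite (Ob_iso rOb sK rK).
by apply: eq_bigr => K /andP[sK rK]; rewrite mul1n card_Iso_rep.
Qed.

Local Open Scope ring_scope.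

Lemma chi_sum :
  \sum_(a in Ob) (- (mu a)%:~R / (#|F a P|)%:R) =
  \sum_(C in Fstar_classes P F)
     (- (mu (class_rep C))%:~R / (#|F (class_rep C) (class_rep C)|)%:R : rat).
Proof.
rewrite (partition_big_imset (fun K => cls K)) /=.
apply: eq_bigr => C CC; have [rOb eC rC] := rep_cls CC.
set r := class_rep C in rOb eC rC *; have sr := Ob_sub rOb.
rewrite (eq_bigr (fun _ => (- (mu r)%:~R / (#|F r P|)%:R : rat))); last first.
  move=> a /andP[aOb]; rewrite eC cls_eq // => ra; have sa := Ob_sub aOb.
  by rewrite (Fiso_mu FS sr sa ra) (card_F_src FS sr sa (@subPP _ P) ra).
rewrite sumr_const card_F_cls // natrM.
have -> : #|[pred a | (a \in Ob) && (cls a == C)]| = #|cls r|.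
  apply: eq_card => a; rewrite memcls /= unfold_in /=; case aOb: (a \in Ob) => //=.
  by rewrite eC cls_eq.
have c0 : (#|cls r|)%:R != 0 :> rat.
  by rewrite pnatr_eq0 -lt0n; apply/card_gt0P; exists r; rewrite memcls rOb (Fiso_refl FS sr).
have f0 : (#|F r r|)%:R != 0 :> rat.
  rewrite pnatr_eq0 -lt0n; apply/card_gt0P; exists (restrict r id).
  by apply: (conj1_F FS sr sr).
rewrite -mulr_natr; move: c0 f0; set c := (#|cls r|)%:R; set y := (#|F r r|)%:R.
move=> c0 f0; field. by rewrite c0 f0.
Qed.

End Chi.

Section Weisner.
Variable gT : finGroupType.
Local Open Scope group_scope.
Implicit Types Q R K X M : {set gT}.

Definition SW Z M := (\sum_(x : {set gT} | group_set x && (x \subset M) && (x <*> Z == M)) mu x)%R.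

Lemma weisner_gen Z M : group_set Z -> Z != 1 -> group_set M -> Z \subset M -> SW Z M = 0%R.
Proof.
move=> gZ nZ; elim: {M}_.+1 {-2}M (ltnSn #|M|) => // n IH M Mn gM ZM.
have nM : M != 1.
  apply: contra nZ => /eqP MZ; rewrite eqEsubset -{1}MZ ZM /=.
  by rewrite set1gE sub1set; case/andP: gZ.
have := mu_sum0 gM nM.
rewrite (partition_big (fun x => x <*> Z)
   (fun M' => group_set M' && (Z \subset M') && (M' \subset M))) /=; last first.
  move=> x /andP[gx xM]; rewrite joing_subr groupP /=.
  have -> : M = Group gM by [].
  by rewrite join_subG xM ZM.
rewrite (bigD1 M) /=; last by rewrite gM ZM subxx.
set rest := (X in (_ + X)%R).
have -> : rest = 0%R.
  apply: big1 => M' /andP[/andP[/andP[gM' ZM'] M'M] nM'M].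
  rewrite -[RHS](IH M') // /SW.
  - apply: eq_bigl => x; apply/andP/andP=> [[/andP[gx _] e]|[/andP[gx xM'] e]].
      by rewrite gx -(eqP e) joing_subl.
    by rewrite gx (subset_trans xM' M'M).
  - have : M' \proper M by rewrite properEneq nM'M.
    by move/proper_card => c; apply: leq_trans c _.
rewrite addr0 /SW => h; rewrite -[RHS]h; apply: eq_bigl => x.
apply/andP/andP=> [[/andP[gx xM] e]|[/andP[gx _] e]].
  by rewrite gx xM.
by rewrite gx -(eqP e) joing_subl.
Qed.

End Weisner.

Section MuDvd.
Variable gT : finGroupType.
Local Open Scope group_scope.
Implicit Types Q R K X M : {set gT}.

Lemma mu_Phi (X : {group gT}) : 'Phi(X) != 1 -> mu X = 0%R.
Proof.
move=> nPhi; have := weisner_gen (groupP 'Phi(X)) nPhi (groupP X) (Phi_sub X).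
rewrite /SW (bigD1 (X : {set gT})) /=; last first.
  by rewrite groupP subxx /=; apply/eqP/joing_idPl; apply: Phi_sub.
rewrite big1 ?addr0 // => x /andP[/andP[/andP[gx _] /eqP e] nx].
have : <<x>> = X by apply: Phi_nongen; rewrite joingC.
by rewrite (genGid (Group gx)) /= => ex; rewrite ex eqxx in nx.
Qed.

Lemma homX (X : {set gT}) (s : gT -> gT) : group_set X ->
  {in X &, forall x y, s (x * y) = s x * s y} -> forall x n, x \in X -> s (x ^+ n) = s x ^+ n.
Proof.
move=> gX hm x n xX; elim: n => [|n IHn]; first by rewrite !expg0 (hom1 gX hm).
have xnX : x ^+ n \in X by apply: (@groupX _ (Group gX)).
by rewrite !expgS hm // IHn.
Qed.

Lemma imM (X A B : {set gT}) (s : gT -> gT) :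
  {in X &, forall x y, s (x * y) = s x * s y} -> A \subset X -> B \subset X ->
  s @: (A * B) = (s @: A) * (s @: B).
Proof.
move=> hm AX BX; apply/setP=> y; apply/imsetP/mulsgP.
  case=> _ /mulsgP[a b aA bB ->] ->; exists (s a) (s b); rewrite ?hm //;
    try by apply: imset_f.
  exact: (subsetP AX). exact: (subsetP BX).
case=> _ _ /imsetP[a aA ->] /imsetP[b bB ->] ->; exists (a * b); first exact: mem_mulg.
by rewrite hm //; [exact: (subsetP AX) | exact: (subsetP BX)].
Qed.


Variable p : nat.
Hypothesis pr : prime p.

Lemma mu_dvd n (X : {group gT}) (S : {group {perm gT}}) : #|X| < n ->
  p.-group X -> p.-group S ->
  (forall s, s \in S -> {in X &, forall x y, s (x * y) = s x * s y}) ->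
  (forall s, s \in S -> s @: X \subset X) ->
  (forall s, s \in S -> {in X, forall x, s x = x} -> s = 1) ->
  (#|S|%:Z %| mu X)%Z.
Proof.
elim: n X S => // n IH X S Xn pX pS hm sX faith.
have gX := groupP X.
case: (eqVneq (X : {set gT}) 1) => [X1 | nX].
  have -> : #|S| = 1%N.
    apply/eqP; rewrite -trivg_card1; apply/eqP/trivgP/subsetP=> s sS.
    rewrite inE; apply/eqP; apply: faith => // x; rewrite X1 inE => /eqP ->.
    exact: (hom1 gX (hm s sS)).
  exact: dvd1z.
case: (eqVneq 'Phi(X) 1) => [Phi1 | nPhi]; last by rewrite mu_Phi.
have abX : p.-abelem X by rewrite -trivg_Phi // Phi1.
have sXe : forall s, s \in S -> s @: X = X.
  move=> s sS; apply/eqP; rewrite eqEcard sX //=.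
  by rewrite card_imset //; apply: perm_inj.
have actsX : [acts S, on X | 'P].
  apply/actsP=> s sS x /=; rewrite apermE; apply/idP/idP=> h; last first.
    by rewrite -(sXe s sS); apply: imset_f.
  move: h; rewrite -{1}(sXe s sS) => /imsetP[y yX /perm_inj ->] //.
have [z zX [nz fz]] : exists2 z, z \in X & z != 1 /\ forall s, s \in S -> s z = z.
  have := pgroup_fix_mod pS actsX.
  have [_ pX' _] := pgroup_pdiv pX nX.
  move/eqP; rewrite eqn_mod_dvd; last first.
    by apply: subset_leq_card; apply: subsetIl.
  move=> dv; have pFix : p %| #|'Fix_(X | 'P)(S)|.
    by rewrite -(dvdn_subr _ pX') // (subset_leq_card (subsetIl _ _)).
  case: (boolP [exists y in 'Fix_(X | 'P)(S), y != 1]) => [/exists_inP[y yF ny] | none].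
    move: yF; rewrite inE => /andP[yX yF]; exists y => //; split=> // s sS.
    by move/afixP: yF => fy; have := fy s sS.
  have F1 : 1 \in 'Fix_(X | 'P)(S).
    rewrite inE group1 /=; apply/afixP=> s sS.
    exact: (hom1 gX (hm s sS)).
  have : #|'Fix_(X | 'P)(S)| <= 1.
    rewrite -(cards1 (1 : gT)); apply: subset_leq_card; apply/subsetP=> y yF.
    rewrite inE; apply: contraR none => ny; apply/exists_inP; exists y => //.
  have : 0 < #|'Fix_(X | 'P)(S)| by apply/card_gt0P; exists 1.
  move: pFix; case: #|_| => [|[|m]] //= p1 _ _.
  by move: pr; rewrite (dvdn1 p) in p1; rewrite (eqP p1).
have ZX : <[z]> \subset X by rewrite cycle_subG.
have nZ : <[z]> != 1 :> {set gT} by rewrite cycle_eq1.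
have fZ : forall s, s \in S -> {in <[z]>, forall y, s y = y}.
  by move=> s sS y /cycleP[i ->]; rewrite (homX gX (hm s sS) _ zX) fz.
have abelX : abelian X by apply: abelem_abelian abX.
have joinE : forall x, group_set x -> x \subset X -> x <*> <[z]> = x * <[z]>.
  move=> x gx xX; apply: (@comm_joingE _ (Group gx) <[z]>%G); apply: normC.
  apply: subset_trans xX _; apply: subset_trans abelX _.
  exact: subset_trans (centS ZX) (cent_sub _).
have W := weisner_gen (groupP <[z]>%G) nZ gX ZX.
pose Cset := [set x : {set gT} | [&& group_set x, x \subset X, x <*> <[z]> == X & x != X]].
have muX : mu X = (- \sum_(x in Cset) mu x)%R.
  move: W; rewrite /SW (bigD1 (X : {set gT})) /=; last first.
    by rewrite gX subxx; apply/eqP/joing_idPl.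
  move/eqP; rewrite addr_eq0 => /eqP ->; congr (- _)%R; apply: eq_bigl => x.
  by rewrite inE -!andbA.
rewrite muX rpredN.
have PsE : forall x (s : {perm gT}), ('P^* )%act x s = s @: x.
  by move=> x s; rewrite /= setactE.
have injs : forall s : {perm gT}, {in X &, injective s}.
  by move=> s a b _ _; apply: perm_inj.
have fwd : forall s x, s \in S -> x \in Cset -> s @: x \in Cset.
  move=> s x sS; rewrite !inE => /and4P[gx xX jx nx].
  have hmx : {in x &, forall a b, s (a * b) = s a * s b}.
    by move=> a b aa bb; apply: hm => //; apply: (subsetP xX).
  have gsx : group_set (s @: x) by apply: group_set_im.
  have sxX : s @: x \subset X by rewrite -(sXe s sS) imsetS.
  rewrite gsx sxX /=; apply/andP; split.
    rewrite joinE // -[X in _ == X](sXe s sS) -(eqP jx) joinE // (imM (hm s sS) xX ZX).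
    apply/eqP; congr (_ * _); symmetry; rewrite -[RHS]imset_id; apply: eq_in_imset => y yZ.
    by rewrite (fZ s sS).
  apply: contra nx => /eqP e; rewrite eqEcard xX /= -e card_imset //.
  exact: perm_inj.
have actsC : [acts S, on Cset | 'P^*].
  apply/actsP=> s sS x; rewrite PsE; apply/idP/idP=> h; last exact: fwd.
  have : (s^-1) @: (s @: x) \in Cset by apply: fwd => //; rewrite groupV.
  by rewrite -!PsE actK.
have part := orbit_partition actsC.
rewrite -(cover_partition part) big_trivIset; last by case/and3P: part.
apply: rpred_sum => _ /imsetP[x0 x0C ->].
move: (x0C); rewrite inE => /and4P[gx0 x0X jx0 nx0].
have e : forall y, y \in orbit 'P^* S x0 -> mu y = mu x0.
  move=> y /orbitP[s sS <-]; rewrite PsE.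
  exact: (mu_inv gX (hm s sS) (injs s) gx0 x0X).
rewrite (eq_bigr _ e) sumr_const card_orbit.
set T := 'C_S[x0 | 'P^*].
have TS : T \subset S by apply: subsetIl.
rewrite -(Lagrange TS) -mulr_natr PoszM natz.
apply: dvdz_mul; last exact: dvdzz.
apply: (IH (Group gx0) [group of T]) => /=.
- have : x0 \proper X by rewrite properEneq nx0 x0X.
  by move/proper_card=> c; apply: leq_trans c _.
- exact: (@pgroupS _ _ X (Group gx0) x0X pX).
- exact: pgroupS TS pS.
- move=> s /(subsetP TS) sS a b aa bb; apply: hm => //; exact: (subsetP x0X).
- move=> s; rewrite inE => /andP[sS /astab1P]; rewrite PsE => ->; exact: subxx.
move=> s sT fx; have sS := subsetP TS s sT; apply: faith => // y yX.
have : y \in x0 * <[z]> by rewrite -joinE // (eqP jx0).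
case/mulsgP=> a b aa bb ->.
rewrite hm; [|done|exact: (subsetP x0X)|exact: (subsetP ZX)]. move: (fx a aa) (fZ s sS b bb) => -> -> //. Qed.

End MuDvd.

Section PL.
Local Open Scope ring_scope.
Variable p : nat.
Hypothesis pr : prime p.

Lemma plocal_fracz (n d : int) : ~~ (p %| `|d|)%N ->
  p_local_integer p (n%:~R / d%:~R).
Proof.
move=> nd; rewrite /p_local_integer; move: nd.
case: (divqP n d) => [| k x k0]; first by rewrite dvdn0.
rewrite abszM Euclid_dvdM // negb_or => /andP[_ h]; exact: h.
Qed.

Lemma plocal_frac (n : int) (d : nat) : ~~ (p %| d)%N ->
  p_local_integer p (n%:~R / (Posz d)%:~R).
Proof. by move=> h; apply: (@plocal_fracz n (Posz d)). Qed.

Lemma plocal0 : p_local_integer p 0.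
Proof.
rewrite /p_local_integer (_ : denq 0 = 1) //; rewrite dvdn1.
by apply/eqP => p1; have := pr; rewrite p1.
Qed.

Lemma plocalD x y : p_local_integer p x -> p_local_integer p y ->
  p_local_integer p (x + y).
Proof.
rewrite /p_local_integer => hx hy.
have -> : x + y = (numq x * denq y + numq y * denq x)%:~R /
                   (Posz (`|denq x| * `|denq y|)%N)%:~R.
  rewrite PoszM !abszE !gtr0_norm ?denq_gt0 //.
  rewrite -{1}(divq_num_den x) -{1}(divq_num_den y).
  rewrite rmorphD /= !rmorphM /=.
  have dx : (denq x)%:~R != 0 :> rat by rewrite intr_eq0 denq_neq0.
  have dy : (denq y)%:~R != 0 :> rat by rewrite intr_eq0 denq_neq0.
  by field; rewrite dx dy.
by apply: plocal_frac; rewrite Euclid_dvdM // negb_or hx hy.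
Qed.

Lemma plocal_sum (I : finType) (A : pred I) (f : I -> rat) :
  (forall i, A i -> p_local_integer p (f i)) -> p_local_integer p (\sum_(i | A i) f i).
Proof.
move=> h; apply: (big_ind (fun x => p_local_integer p x)) => //.
  exact: plocal0.
exact: plocalD.
Qed.

Lemma plocal_term (m : int) (N : nat) : (0 < N)%N -> ((N`_p)%:Z %| m)%Z ->
  p_local_integer p (- m%:~R / N%:R).
Proof.
move=> N0 /dvdzP[q ->].
have -> : - (q * (N`_p)%:Z)%:~R / N%:R = (- q)%:~R / (Posz (N`_(p^'))%N)%:~R :> rat.
  rewrite -[in X in _ / X](partnC p N0) natrM rmorphN rmorphM /=.
  have h1 : (N`_p)%:R != 0 :> rat by rewrite pnatr_eq0 -lt0n part_gt0.
  have h2 : (N`_(p^'))%:R != 0 :> rat by rewrite pnatr_eq0 -lt0n part_gt0.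
  have e1 : ((N`_p)%:Z)%:~R = (N`_p)%:R :> rat by [].
  have e2 : ((N`_(p^'))%:Z)%:~R = (N`_(p^'))%:R :> rat by [].
  rewrite e1 e2 mulNr; field; by rewrite h1 h2.
apply: plocal_frac; rewrite -p'natE //; exact: part_pnat.
Qed.

End PL.

Section Aut.
Variable gT : finGroupType.
Local Open Scope group_scope.
Implicit Types Q R K X : {set gT}.
Variable P : {group gT}.
Variable F : {set gT} -> {set gT} -> {set {ffun gT -> gT}}.
Hypothesis FS : fusion_system P F.
Local Notation sub := (subgp P).

Lemma restrictE Q (f : gT -> gT) x : restrict Q f x = if x \in Q then f x else 1.
Proof. by rewrite ffunE. Qed.

Lemma AutFP Q (s : {perm gT}) : sub Q -> s \in AutF F Q ->
  [/\ {in Q &, forall x y, s (x * y) = s x * s y}, {in Q, forall x, s x \in Q},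
      forall x, x \notin Q -> s x = x & restrict Q s \in F Q Q].
Proof.
move=> sQ; rewrite inE => /andP[fF /forall_inP fx].
have [hm _ inQ _] := FhomP FS sQ sQ fF.
have gQ : group_set Q by case/andP: sQ.
split=> //.
- move=> x y xQ yQ; have := hm x y xQ yQ; rewrite !restrictE xQ yQ.
  by have /group_setP[_ ->] := gQ.
- by move=> x xQ; have := inQ x xQ; rewrite restrictE xQ.
- by move=> x xn; apply/eqP; apply: fx; rewrite inE.
Qed.

Lemma AutF_group Q : sub Q -> group_set (AutF F Q).
Proof.
move=> sQ; have gQ : group_set Q by case/andP: sQ.
apply/group_setP; split.
  rewrite inE; apply/andP; split.
    have -> : restrict Q (1 : {perm gT}) = restrict Q id.
      by apply/ffunP=> x; rewrite !ffunE perm1.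
    by apply: (conj1_F FS sQ sQ).
  by apply/forall_inP=> x _; rewrite perm1.
move=> s t sA tA; have [_ sQQ so sF] := AutFP sQ sA; have [_ tQQ to tF] := AutFP sQ tA.
rewrite inE; apply/andP; split.
  have -> : restrict Q (s * t) = compmap Q (restrict Q s) (restrict Q t).
    apply/ffunP=> x; rewrite /compmap !restrictE permM.
    by case: ifP => // xQ; rewrite sQQ.
  exact: (fs_comp FS sQ sQ sQ sF tF).
apply/forall_inP=> x; rewrite inE => xn; rewrite permM so // to //.
Qed.

Lemma card_AutF Q : sub Q -> #|AutF F Q| = #|F Q Q|.
Proof.
move=> sQ; have inj : {in AutF F Q &, injective (fun s : {perm gT} => restrict Q s)}.
  move=> s t sA tA e; apply/permP=> x.
  have [_ _ so _] := AutFP sQ sA; have [_ _ to _] := AutFP sQ tA.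
  case xQ: (x \in Q); last by rewrite so ?to ?xQ.
  by have := congr1 (fun f : {ffun gT -> gT} => f x) e; rewrite !restrictE xQ.
rewrite -(card_in_imset inj).
suff -> : [set restrict Q s | s : {perm gT} in AutF F Q] = F Q Q by [].
apply/setP=> f.
apply/imsetP/idP=> [[s sA ->]|fF]; first by have [] := AutFP sQ sA.
have [_ finj fQ fo] := FhomP FS sQ sQ fF.
pose g := [ffun x => if x \in Q then f x else x].
have ginj : injective g.
  move=> x y; rewrite !ffunE.
  case xQ: (x \in Q); case yQ: (y \in Q) => //.
  - exact: finj.
  - by move=> e; have := fQ x xQ; rewrite e yQ.
  - by move=> e; have := fQ y yQ; rewrite -e xQ.
exists (perm ginj).
  rewrite inE; apply/andP; split.
    suff -> : restrict Q (perm ginj) = f by [].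
    apply/ffunP=> x; rewrite restrictE permE ffunE.
    by case xQ: (x \in Q) => //; rewrite fo ?xQ.
  by apply/forall_inP=> x; rewrite inE permE ffunE => /negPf ->.
apply/ffunP=> x; rewrite restrictE permE ffunE.
by case xQ: (x \in Q) => //; rewrite fo ?xQ.
Qed.

Variable p : nat.
Hypothesis pr : prime p.
Hypothesis pP : p.-group P.

Lemma mu_dvd_F K : sub K -> (((#|F K K|)`_p)%:Z %| mu K)%Z.
Proof.
move=> sK; have gK : group_set K by case/andP: sK.
have gA := AutF_group sK.
have [S sylS] := Sylow_exists p (Group gA).
rewrite -(card_AutF sK) -[#|AutF F K|]/(#|Group gA|) -(card_Hall sylS).
have SA : S \subset AutF F K by case/andP: sylS.
apply: (@mu_dvd _ p pr #|K|.+1 (Group gK) S) => //.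
- by apply: pgroupS pP; case/andP: sK.
- exact: pHall_pgroup sylS.
- by move=> s /(subsetP SA) sA; have [] := AutFP sK sA.
- move=> s /(subsetP SA) sA; have [_ sQQ _ _] := AutFP sK sA.
  by apply/subsetP=> _ /imsetP[x xK ->]; apply: sQQ.
move=> s /(subsetP SA) sA fx; have [_ _ so _] := AutFP sK sA.
apply/permP=> x; rewrite perm1; case xK: (x \in K); first exact: fx.
by rewrite so ?xK.
Qed.

End Aut.

End Aux.
Import Aux.

Local Open Scope ring_scope.

Theorem theorem7p2 (gT : finGroupType) (p : nat) (P : {group gT})
    (F : {set gT} -> {set gT} -> {set {ffun gT -> gT}}) :
  prime p -> (p.-group P)%g -> saturated p P F ->
  let Ob := Fstar_ob P in
  let hom := fun a b => #|F a b|%N in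
  let chi := \sum_(C in Fstar_classes P F)
               (- (mu (class_rep C))%:~R / (#|F (class_rep C) (class_rep C)|)%:R : rat) in
  coweighting Ob hom (fun K => - (mu K)%:~R / (#|F K P|)%:R)
  /\ euler_char Ob hom chi
  /\ p_local_integer p chi.
Proof.
move=> pr pP sat Ob hom chi; have FS := sat_fs sat.
split; first exact: (coweight FS).
split.
  split; first by eexists; exact: (weight FS).
  exists (fun K => - (mu K)%:~R / (#|F K P|)%:R); first exact: (coweight FS).
  exact: (chi_sum FS).
rewrite /chi; apply: plocal_sum => // C CC.
have [rOb _ _] := rep_cls FS CC.
have sr := Ob_sub rOb.
apply: plocal_term => //.
  apply/card_gt0P; exists (restrict (class_rep C) id); exact: (conj1_F FS sr sr).
exact: (mu_dvd_F FS pr pP sr).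
Qed.
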